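(* Let $a=a_0+a_1e_1+a_2e_2+a_3e_3\in C\ell_2\setminus\mathbb{R}$ with $G(a)=0$. Then there exists $u\in C\ell_2\setminus Z(C\ell_2)$ such that $u^{-1}au=a_0+e_2+e_3$.
   Context: $C\ell_2$ is the 4-dimensional real associative algebra with basis $1,e_1,e_2,e_3$ and multiplication $e_1^2=e_2^2=1$, $e_3^2=-1$, $e_1e_2=e_3=-e_2e_1$, $e_1e_3=e_2=-e_3e_1$, $e_3e_2=e_1=-e_2e_3$; $\mathbb{R}$ is identified with $\mathbb{R}\cdot1$. For $a=a_0+a_1e_1+a_2e_2+a_3e_3$: $G(a)=a_1^2+a_2^2-a_3^2$, $H_a=a_0^2-a_1^2-a_2^2+a_3^2$; $Z(C\ell_2)=\{a:H_a=0\}$, and elements outside $Z(C\ell_2)$ are invertible. *)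

(* Defs.v *)
From HB Require Import structures.
From mathcomp Require Import all_boot all_order all_algebra.
From mathcomp Require Import reals.
Set Implicit Arguments. Unset Strict Implicit. Unset Printing Implicit Defensive.
Import Order.TTheory GRing.Theory Num.Theory.
Local Open Scope ring_scope.

Record Cl2 (R : realType) := mkCl2 { c0 : R; c1 : R; c2 : R; c3 : R }.
Arguments mkCl2 {R}.

Section Cl2ops.
Variable R : realType.

(* Multiplication from e1^2=e2^2=1, e3^2=-1, e1e2=e3=-e2e1,
   e1e3=e2=-e3e1, e3e2=e1=-e2e3, extended bilinearly. *)
Definition cl2_mul (a b : Cl2 R) : Cl2 R :=
  mkCl2 (c0 a * c0 b + c1 a * c1 b + c2 a * c2 b - c3 a * c3 b)
        (c0 a * c1 b + c1 a * c0 b - c2 a * c3 b + c3 a * c2 b)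
        (c0 a * c2 b + c2 a * c0 b + c1 a * c3 b - c3 a * c1 b)
        (c0 a * c3 b + c3 a * c0 b + c1 a * c2 b - c2 a * c1 b).

Definition cl2_one : Cl2 R := mkCl2 1 0 0 0.

Definition cl2_real (r : R) : Cl2 R := mkCl2 r 0 0 0.

Definition cl2_is_real (a : Cl2 R) : Prop := c1 a = 0 /\ c2 a = 0 /\ c3 a = 0.

Definition cl2_G (a : Cl2 R) : R := c1 a ^+ 2 + c2 a ^+ 2 - c3 a ^+ 2.
Definition cl2_H (a : Cl2 R) : R :=
  c0 a ^+ 2 - c1 a ^+ 2 - c2 a ^+ 2 + c3 a ^+ 2.

Definition cl2_Z (a : Cl2 R) : Prop := cl2_H a = 0.

Definition cl2_inverse_of (v u : Cl2 R) : Prop :=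
  cl2_mul v u = cl2_one /\ cl2_mul u v = cl2_one.
End Cl2ops.

(* Main.v *)
Require Import Defs.
From mathcomp Require Import all_boot all_order all_algebra.
From mathcomp Require Import reals.
From mathcomp Require Import ring lra.
Import Order.TTheory GRing.Theory Num.Theory.
Set Implicit Arguments. Unset Strict Implicit.
Local Open Scope ring_scope.

Lemma cl2_ext (R : realType) (x y : Cl2 R) :
  c0 x = c0 y -> c1 x = c1 y -> c2 x = c2 y -> c3 x = c3 y -> x = y.
Proof. by case: x; case: y => /= ? ? ? ? ? ? ? ? -> -> -> ->. Qed.

Lemma cl2_mulA (R : realType) (x y z : Cl2 R) :
  cl2_mul x (cl2_mul y z) = cl2_mul (cl2_mul x y) z.
Proof. apply: cl2_ext; rewrite /cl2_mul /=; ring. Qed.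

Lemma cl2_mul1 (R : realType) (x : Cl2 R) : cl2_mul (cl2_one R) x = x.
Proof. apply: cl2_ext; rewrite /cl2_mul /=; ring. Qed.

Lemma key (R : realType) (a u uinv : Cl2 R) :
  cl2_inverse_of uinv u ->
  cl2_mul a u = cl2_mul u (mkCl2 (c0 a) 0 1 1) ->
  cl2_mul (cl2_mul uinv a) u = mkCl2 (c0 a) 0 1 1.
Proof.
move=> [h1 h2] h; rewrite -cl2_mulA h cl2_mulA h1; exact: cl2_mul1.
Qed.

Definition cinv (R : realType) (u : Cl2 R) : Cl2 R :=
  let h := cl2_H u in mkCl2 (c0 u / h) (- c1 u / h) (- c2 u / h) (- c3 u / h).

Lemma cinvP (R : realType) (u : Cl2 R) : cl2_H u != 0 -> cl2_inverse_of (cinv u) u.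
Proof.
move=> hH; rewrite /cinv /cl2_inverse_of; move: hH; rewrite /cl2_H => hH.
split; apply: cl2_ext; rewrite /cl2_mul /cl2_one /=; field; done.
Qed.

Theorem proposition5p5 (R : realType) (a : Cl2 R) :
  ~ cl2_is_real a -> cl2_G a = 0 ->
  exists u : Cl2 R, ~ cl2_Z u /\
    exists uinv : Cl2 R, cl2_inverse_of uinv u /\
      cl2_mul (cl2_mul uinv a) u = mkCl2 (c0 a) 0 1 1.
Proof.
case: a => a0 a1 a2 a3; rewrite /cl2_is_real /cl2_G /= => nr hG.
have g1 : a1 * (a1 ^+ 2 + a2 ^+ 2 - a3 ^+ 2) = 0 by rewrite hG mulr0.
have g2 : a2 * (a1 ^+ 2 + a2 ^+ 2 - a3 ^+ 2) = 0 by rewrite hG mulr0.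
have g3 : a3 * (a1 ^+ 2 + a2 ^+ 2 - a3 ^+ 2) = 0 by rewrite hG mulr0.
have a3n : a3 != 0.
  apply/eqP => a30; apply: nr; move: hG; rewrite a30 expr0n /= subr0 => hG.
  have : a1 ^+ 2 = 0 /\ a2 ^+ 2 = 0.
    have q1 := sqr_ge0 a1; have q2 := sqr_ge0 a2; split; lra.
  by case=> /eqP; rewrite sqrf_eq0 => /eqP -> /eqP; rewrite sqrf_eq0 => /eqP ->.
have [s0|sn] := eqVneq (a2 + a3) 0.
- have hd : a2 - a3 != 0.
    apply/eqP => d; move/eqP: a3n; apply; lra.
  exists (mkCl2 a1 a1 (2 + (a2 - a3)) (2 - (a2 - a3))).
  have hH : cl2_H (mkCl2 a1 a1 (2 + (a2 - a3)) (2 - (a2 - a3))) != 0.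
    rewrite /cl2_H /=.
    have -> : a1 ^+ 2 - a1 ^+ 2 - (2 + (a2 - a3)) ^+ 2 + (2 - (a2 - a3)) ^+ 2
      = -8 * (a2 - a3) by ring.
    by rewrite mulf_eq0 negb_or hd andbT; lra.
  split; first by rewrite /cl2_Z; apply/eqP.
  exists (cinv (mkCl2 a1 a1 (2 + (a2 - a3)) (2 - (a2 - a3)))).
  split; first exact: cinvP.
  apply: key; first exact: cinvP.
  apply: cl2_ext; rewrite /cl2_mul /=;
    (apply/eqP; rewrite -subr_eq0; apply/eqP;
     first [ transitivity (a1 ^+ 2 + a2 ^+ 2 - a3 ^+ 2); [ring | exact hG]
           | transitivity (- (a1 ^+ 2 + a2 ^+ 2 - a3 ^+ 2)); [ring | by rewrite hG oppr0]
           | ring ]).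
- exists (mkCl2 (a2 + a3 + 2) (a2 + a3 - 2) (- a1) a1).
  have hH : cl2_H (mkCl2 (a2 + a3 + 2) (a2 + a3 - 2) (- a1) a1) != 0.
    rewrite /cl2_H /=.
    have -> : (a2 + a3 + 2) ^+ 2 - (a2 + a3 - 2) ^+ 2 - (- a1) ^+ 2 + a1 ^+ 2
      = 8 * (a2 + a3) by ring.
    by rewrite mulf_eq0 negb_or sn andbT; lra.
  split; first by rewrite /cl2_Z; apply/eqP.
  exists (cinv (mkCl2 (a2 + a3 + 2) (a2 + a3 - 2) (- a1) a1)).
  split; first exact: cinvP.
  apply: key; first exact: cinvP.
  apply: cl2_ext; rewrite /cl2_mul /=;
    (apply/eqP; rewrite -subr_eq0; apply/eqP;
     first [ transitivity (a1 ^+ 2 + a2 ^+ 2 - a3 ^+ 2); [ring | exact hG]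
           | transitivity (- (a1 ^+ 2 + a2 ^+ 2 - a3 ^+ 2)); [ring | by rewrite hG oppr0]
           | ring ]).
Qed.
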